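(* For $N\ge 3$ let $\tilde{\mathcal{F}}_N=\{e_j\}_{j=1}^N$ be the harmonic frame of $\mathbb{R}^2$, $e_j=[\cos(2j\pi/N),\sin(2j\pi/N)]^T$. Let $r>0$, $\delta>0$ satisfy $$\int_{-\pi}^{\pi}\Delta_\delta(r\cos\theta)\cos\theta\,d\theta=0.$$ Then $\mathcal{E}_\delta(r,\tilde{\mathcal{F}}_N)=O(1/N)$ as $N\to\infty$ (with implied constant depending on $r,\delta$). In particular, this condition holds when $$\frac{r}{\delta}=\frac{\sqrt{8-2\sqrt{16-\pi^2}}}{\pi}.$$
   Context: For $\delta>0$, $Q_\delta(t):=\delta\lfloor t/\delta+1/2\rfloor$ and $\Delta_\delta(t):=t-Q_\delta(t)$. For a unit-norm tight frame $\mathcal{F}=\{e_j\}_{j=1}^N$ of $\mathbb{R}^2$ (i.e. $\|e_j\|=1$, $\sum_j e_je_j^T=\frac N2 I_2$), $E_\delta(x,\mathcal{F}):=\bigl\|x-\frac{2}{N}\sum_{j=1}^N Q_\delta(\langle x,e_j\rangle)e_j\bigr\|$. For $r>0$ set $x_\psi:=r[\cos\psi,\sin\psi]^T$ and $\mathcal{E}_\delta(r,\mathcal{F}):=\bigl(\int_0^{2\pi}E_\delta(x_\psi,\mathcal{F})^2\,d\psi\bigr)^{1/2}$. *)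

(* Defs.v *)
From Stdlib Require Import Reals Lra.
Open Scope R_scope.

(* floor of a real number: Int_part x = up x - 1 is the largest integer <= x *)
Definition floorR (x : R) : R := IZR (Int_part x).

Definition Qd (delta t : R) : R := delta * floorR (t / delta + / 2).

Definition Dd (delta t : R) : R := t - Qd delta t.

Definition has_integral (f : R -> R) (a b I : R) : Prop :=
  exists pr : Riemann_integrable f a b, RiemannInt pr = I.

Definition harm (N j : nat) : R * R :=
  (cos (2 * INR j * PI / INR N), sin (2 * INR j * PI / INR N)).

Definition Edelta (delta : R) (N : nat) (e : nat -> R * R) (x1 x2 : R) : R :=
  let c j := Qd delta (x1 * fst (e j) + x2 * snd (e j)) in
  let s1 := sum_f 1 N (fun j => c j * fst (e j)) in
  let s2 := sum_f 1 N (fun j => c j * snd (e j)) in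
  sqrt ((x1 - 2 / INR N * s1) ^ 2 + (x2 - 2 / INR N * s2) ^ 2).

Definition Esq (delta r : R) (N : nat) (e : nat -> R * R) (psi : R) : R :=
  (Edelta delta N e (r * cos psi) (r * sin psi)) ^ 2.

(* Main.v *)
Require Import Defs.
From Stdlib Require Import Reals Lra Lia ZArith Classical ClassicalEpsilon.
Open Scope R_scope.

Lemma floorR_spec x : floorR x <= x < floorR x + 1.
Proof. unfold floorR; destruct (base_Int_part x); lra. Qed.

Lemma floorR_unique x (z : Z) : IZR z <= x < IZR z + 1 -> floorR x = IZR z.
Proof.
  intros [H1 H2]; destruct (floorR_spec x) as [H3 H4]; unfold floorR in *.
  f_equal. assert (IZR (Int_part x) < IZR z + 1) by lra.
  assert (IZR z < IZR (Int_part x) + 1) by lra.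
  rewrite <- plus_IZR in *. apply lt_IZR in H; apply lt_IZR in H0. lia.
Qed.

Lemma floorR_mono x y : x <= y -> floorR x <= floorR y.
Proof.
  intros H; destruct (floorR_spec x); destruct (floorR_spec y); unfold floorR in *.
  assert (IZR (Int_part x) < IZR (Int_part y) + 1) by lra.
  rewrite <- plus_IZR in H4; apply lt_IZR in H4. apply IZR_le; lia.
Qed.

Lemma Qd_bound d t : 0 < d -> t - d/2 < Qd d t <= t + d/2.
Proof.
  intros Hd; unfold Qd; destruct (floorR_spec (t/d + /2)) as [H1 H2].
  split.
  - apply Rmult_lt_compat_l with (r:=d) in H2; [|lra].
    replace (d * (t/d + /2)) with (t + d/2) in H2 by (field; lra). lra.
  - apply Rmult_le_compat_l with (r:=d) in H1; [|lra].
    replace (d * (t/d + /2)) with (t + d/2) in H1 by (field; lra). lra.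
Qed.

Lemma Qd_abs d t : 0 < d -> Rabs (Qd d t) <= Rabs t + d.
Proof. intros Hd; destruct (Qd_bound d t Hd); unfold Rabs; repeat destruct Rcase_abs; lra. Qed.

Lemma Qd_mono d x y : 0 < d -> x <= y -> Qd d x <= Qd d y.
Proof.
  intros Hd H; unfold Qd; apply Rmult_le_compat_l; [lra|].
  apply floorR_mono. apply Rplus_le_compat_r. unfold Rdiv; apply Rmult_le_compat_r; [|lra].
  left; apply Rinv_0_lt_compat; lra.
Qed.
Lemma stepfun_int (h : R -> R) a b : IsStepFun h a b -> Riemann_integrable h a b.
Proof.
  intros Hs eps. exists (mkStepFun Hs). exists (mkStepFun (StepFun_P4 a b 0)).
  split.
  - intros t _; simpl; unfold fct_cte; rewrite Rminus_diag, Rabs_R0; lra.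
  - rewrite StepFun_P18. rewrite Rmult_0_l, Rabs_R0. apply cond_pos.
Qed.

Lemma endpt_mod f g a b : a <= b -> (forall x, a < x < b -> f x = g x) ->
  Riemann_integrable g a b -> Riemann_integrable f a b.
Proof.
  intros hab Heq Hg.
  assert (Hs : IsStepFun (fun x => f x - g x) a b).
  { exists (cons a (cons b nil)). exists (cons 0 nil).
    unfold adapted_couple; repeat split.
    - intros i Hi; simpl in Hi. destruct i; [simpl; auto | lia].
    - simpl. unfold Rmin; destruct Rle_dec; lra.
    - simpl. unfold Rmax; destruct Rle_dec; lra.
    - intros i Hi; simpl in Hi. destruct i; [|lia].
      intros x Hx; unfold open_interval in Hx; simpl in Hx. rewrite Heq by lra. simpl; ring. }
  apply Riemann_integrable_ext with (f := fun x => (f x - g x) + 1 * g x).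
  - intros; ring.
  - apply RiemannInt_P10; [apply stepfun_int; exact Hs | exact Hg].
Qed.

Definition LPC (f : R -> R) (x : R) : Prop :=
  exists eta, 0 < eta /\ exists gl gr : R -> R,
    (forall y, continuity_pt gl y) /\ (forall y, continuity_pt gr y) /\
    (forall y, x - eta < y < x -> f y = gl y) /\ (forall y, x < y < x + eta -> f y = gr y).

Lemma cont_int g a b : a <= b -> (forall y, continuity_pt g y) -> Riemann_integrable g a b.
Proof. intros; apply continuity_implies_RiemannInt; auto. Qed.

Lemma LPC_int_inh f a b : a <= b -> (forall x, a <= x <= b -> LPC f x) ->
  inhabited (Riemann_integrable f a b).
Proof.
  intros hab HL.
  set (S := fun y => a <= y <= b /\ inhabited (Riemann_integrable f a y)).
  assert (Hb : bound S). { exists b; intros y [Hy _]; lra. }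
  assert (Hne : exists y, S y). { exists a; split; [lra| constructor; apply RiemannInt_P7]. }
  destruct (completeness S Hb Hne) as [s [Hub Hlub]].
  assert (Has : a <= s) by (apply Hub; destruct Hne; unfold S; split; [lra|constructor; apply RiemannInt_P7]).
  assert (Hsb : s <= b) by (apply Hlub; intros y [Hy _]; lra).
  destruct (HL s (conj Has Hsb)) as [eta [Heta [gl [gr [Cl [Cr [El Er]]]]]]].
  assert (Ss : inhabited (Riemann_integrable f a s)).
  { destruct (Req_dec s a) as [E|NE].
    - subst s; constructor; apply RiemannInt_P7.
    - set (e := Rmin eta (s - a)).
      assert (He : 0 < e) by (unfold e, Rmin; destruct Rle_dec; lra).
      assert (Hex : exists y, S y /\ s - e < y).
      { apply NNPP; intro Hn.
        assert (s <= s - e); [|lra].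
        apply Hlub; intros y Sy. destruct (Rle_dec y (s - e)); auto.
        exfalso; apply Hn; exists y; split; auto; lra. }
      destruct Hex as [y [[Hy [Iy]] Hy2]].
      assert (Hys : y <= s) by (apply Hub; split; auto; constructor; auto).
      constructor. apply RiemannInt_P21 with y; auto; try lra.
      apply endpt_mod with gl; auto.
      + intros z Hz; apply El. unfold e, Rmin in Hy2; destruct Rle_dec; lra.
      + apply cont_int; auto. }
  assert (Es : s = b).
  { destruct (Req_dec s b) as [E|NE]; auto. exfalso.
    set (z := Rmin (s + eta/2) b).
    assert (Hz1 : s < z) by (unfold z, Rmin; destruct Rle_dec; lra).
    assert (Hz2 : z <= b) by (unfold z, Rmin; destruct Rle_dec; lra).
    assert (z <= s); [|lra].
    apply Hub. split; [lra|]. destruct Ss as [Is]. constructor.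
    apply RiemannInt_P21 with s; auto; try lra.
    apply endpt_mod with gr; [lra| |apply cont_int; auto; lra].
    intros w Hw; apply Er. unfold z, Rmin in Hw; destruct Rle_dec; lra. }
  subst s; exact Ss.
Qed.

Lemma LPC_int f a b : a <= b -> (forall x, a <= x <= b -> LPC f x) ->
  Riemann_integrable f a b.
Proof.
  intros hab HL.
  assert (H : exists _ : Riemann_integrable f a b, True).
  { destruct (LPC_int_inh f a b hab HL) as [I]; exists I; auto. }
  exact (proj1_sig (constructive_indefinite_description _ H)).
Qed.

Lemma cont_eps u y : continuity_pt u y -> forall eps, 0 < eps ->
  exists d, 0 < d /\ forall z, Rabs (z - y) < d -> Rabs (u z - u y) < eps.
Proof.
  intros Hc eps He. unfold continuity_pt, continue_in, limit1_in, limit_in in Hc.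
  destruct (Hc eps He) as [d [Hd H]]. exists d; split; auto.
  intros z Hz. destruct (Req_dec z y) as [E|NE].
  - subst; rewrite Rminus_diag, Rabs_R0; auto.
  - apply (H z). split; [unfold D_x, no_cond; auto|]. simpl; unfold R_dist; auto.
Qed.

Lemma floor_side u y (P : R -> Prop) :
  continuity_pt u y ->
  ((forall z, P z -> u y <= u z) \/ (forall z, P z -> u z < u y)) ->
  exists e, 0 < e /\ exists c, forall z, P z -> Rabs (z - y) < e -> floorR (u z) = c.
Proof.
  intros Hc [H|H].
  - destruct (floorR_spec (u y)) as [F1 F2].
    destruct (cont_eps u y Hc (floorR (u y) + 1 - u y)) as [d [Hd Hz]]; [lra|].
    exists d; split; auto. exists (floorR (u y)); intros z Pz Dz.
    specialize (Hz z Dz); specialize (H z Pz).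
    unfold floorR at 2. apply floorR_unique. unfold floorR in *.
    apply Rabs_def2 in Hz. lra.
  - destruct (floorR_spec (u y)) as [F1 F2]. destruct F1 as [F1|F1].
    + destruct (cont_eps u y Hc (u y - floorR (u y))) as [d [Hd Hz]]; [lra|].
      exists d; split; auto. exists (floorR (u y)); intros z Pz Dz.
      specialize (Hz z Dz); specialize (H z Pz).
      unfold floorR at 2. apply floorR_unique. unfold floorR in *.
      apply Rabs_def2 in Hz. lra.
    + destruct (cont_eps u y Hc 1) as [d [Hd Hz]]; [lra|].
      exists d; split; auto. exists (IZR (Int_part (u y) - 1)); intros z Pz Dz.
      specialize (Hz z Dz); specialize (H z Pz).
      apply floorR_unique. rewrite minus_IZR. unfold floorR in *.
      apply Rabs_def2 in Hz. lra.
Qed.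

Lemma cos_diff w s : cos (w + s) - cos w = -2 * sin (s/2) * sin (w + s/2).
Proof.
  rewrite form2. replace ((w + s - w)/2) with (s/2) by field.
  replace ((w + s + w)/2) with (w + s/2) by field. ring.
Qed.

Lemma sin_keep_sign w : sin w <> 0 -> exists d, 0 < d /\ forall v, Rabs (v - w) < d ->
  (0 < sin w -> 0 < sin v) /\ (sin w < 0 -> sin v < 0).
Proof.
  intros Hw. destruct (cont_eps sin w (continuity_sin w) (Rabs (sin w))) as [d [Hd H]].
  { apply Rabs_pos_lt; auto. }
  exists d; split; auto; intros v Hv; specialize (H v Hv).
  apply Rabs_def2 in H. unfold Rabs in H; destruct Rcase_abs in H; split; intros; lra.
Qed.

Lemma sin_half_pos s : 0 < s < PI -> 0 < sin (s/2).
Proof. intros; apply sin_gt_0; pose PI_RGT_0; lra. Qed.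

Lemma sin_half_neg s : - PI < s < 0 -> sin (s/2) < 0.
Proof.
  intros. replace (s/2) with (- (-s/2)) by field. rewrite sin_neg.
  assert (0 < sin (-s/2)) by (apply sin_gt_0; pose PI_RGT_0; lra). lra.
Qed.

Lemma cos_sign_side w (left : bool) : exists e0, 0 < e0 /\
  let P := fun s => if left then - e0 < s < 0 else 0 < s < e0 in
  ((forall s, P s -> cos w <= cos (w + s)) \/ (forall s, P s -> cos (w + s) < cos w)).
Proof.
  assert (HPI := PI_RGT_0).
  destruct (Req_dec (sin w) 0) as [Z|NZ].
  - assert (Hc : cos w <> 0).
    { intro C. pose proof (sin2_cos2 w). rewrite Z, C in H. unfold Rsqr in H. lra. }
    exists PI; split; auto. intro P.
    assert (Hd : forall s, cos (w + s) - cos w = -2 * cos w * (sin (s/2) * sin (s/2))).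
    { intro s. rewrite cos_diff, sin_plus, Z. ring. }
    assert (Hsq : forall s, P s -> 0 < sin (s/2) * sin (s/2)).
    { intros s Ps; unfold P in Ps; destruct left.
      - pose proof (sin_half_neg s ltac:(lra)). nra.
      - pose proof (sin_half_pos s ltac:(lra)). nra. }
    destruct (Rlt_or_le 0 (cos w)) as [Cp|Cn].
    + right; intros s Ps; specialize (Hd s); specialize (Hsq s Ps). nra.
    + left; intros s Ps; specialize (Hd s); specialize (Hsq s Ps).
      assert (cos w < 0) by lra. nra.
  - destruct (sin_keep_sign w NZ) as [d [Hd H]].
    exists (Rmin (2*d) PI); split; [unfold Rmin; destruct Rle_dec; lra|]. intro P.
    assert (HP : forall s, P s -> Rabs (w + s/2 - w) < d /\
      (0 < s -> 0 < sin (s/2)) /\ (s < 0 -> sin (s/2) < 0)).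
    { intros s Ps; unfold P in Ps.
      replace (w + s/2 - w) with (s/2) by ring.
      destruct left; unfold Rmin in Ps; destruct Rle_dec in Ps;
        (split; [unfold Rabs; destruct Rcase_abs; lra|split; intros;
          [apply sin_half_pos | apply sin_half_neg]; lra]). }
    destruct (Rlt_or_le 0 (sin w)) as [Sp|Sn]; [|assert (Sn' : sin w < 0) by lra].
    + destruct left.
      * left; intros s Ps. destruct (HP s Ps) as [A [_ C]]. destruct (H _ A) as [H1 _].
        specialize (H1 Sp). assert (s < 0) by (unfold P in Ps; lra). specialize (C H0).
        pose proof (cos_diff w s). nra.
      * right; intros s Ps. destruct (HP s Ps) as [A [C _]]. destruct (H _ A) as [H1 _].
        specialize (H1 Sp). assert (0 < s) by (unfold P in Ps; lra). specialize (C H0).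
        pose proof (cos_diff w s). nra.
    + destruct left.
      * right; intros s Ps. destruct (HP s Ps) as [A [_ C]]. destruct (H _ A) as [_ H1].
        specialize (H1 Sn'). assert (s < 0) by (unfold P in Ps; lra). specialize (C H0).
        pose proof (cos_diff w s). nra.
      * left; intros s Ps. destruct (HP s Ps) as [A [C _]]. destruct (H _ A) as [_ H1].
        specialize (H1 Sn'). assert (0 < s) by (unfold P in Ps; lra). specialize (C H0).
        pose proof (cos_diff w s). nra.
Qed.

Lemma cont_cosaff A B th : forall y, continuity_pt (fun z => A * cos (z - th) + B) y.
Proof. intro y; reg. Qed.

Lemma u_side A B th x (left : bool) : 0 <= A -> exists e0, 0 < e0 /\
  let P := fun z => if left then x - e0 < z < x else x < z < x + e0 in
  let u := fun z => A * cos (z - th) + B in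
  ((forall z, P z -> u x <= u z) \/ (forall z, P z -> u z < u x)).
Proof.
  intros HA. destruct (cos_sign_side (x - th) left) as [e0 [He0 H]].
  exists e0; split; auto. simpl.
  assert (Hz : forall z, z - th = (x - th) + (z - x)) by (intros; ring).
  destruct HA as [HA|HA].
  - destruct H as [H|H]; [left|right]; intros z Pz; rewrite (Hz z);
      (assert (Ps : if left then - e0 < z - x < 0 else 0 < z - x < e0) by (destruct left; lra));
      specialize (H _ Ps); nra.
  - left; intros; subst; lra.
Qed.

Lemma LPC_floor A B th x : 0 <= A -> LPC (fun z => floorR (A * cos (z - th) + B)) x.
Proof.
  intros HA.
  destruct (u_side A B th x true HA) as [e1 [He1 H1]].
  destruct (u_side A B th x false HA) as [e2 [He2 H2]]. simpl in H1, H2.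
  destruct (floor_side (fun z => A * cos (z - th) + B) x _ (cont_cosaff A B th x) H1)
    as [f1 [Hf1 [c1 Hc1]]].
  destruct (floor_side (fun z => A * cos (z - th) + B) x _ (cont_cosaff A B th x) H2)
    as [f2 [Hf2 [c2 Hc2]]].
  exists (Rmin (Rmin e1 f1) (Rmin e2 f2)). split.
  { repeat (unfold Rmin; destruct Rle_dec); lra. }
  exists (fun _ => c1), (fun _ => c2). split; [intros; apply continuity_pt_const; intros a b; auto|].
  split; [intros; apply continuity_pt_const; intros a b; auto|].
  pose proof (Rmin_l (Rmin e1 f1) (Rmin e2 f2)). pose proof (Rmin_r (Rmin e1 f1) (Rmin e2 f2)).
  pose proof (Rmin_l e1 f1). pose proof (Rmin_r e1 f1).
  pose proof (Rmin_l e2 f2). pose proof (Rmin_r e2 f2).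
  split; intros y Hy.
  - apply Hc1; [cbv beta|unfold Rabs; destruct Rcase_abs]; lra.
  - apply Hc2; [cbv beta|unfold Rabs; destruct Rcase_abs]; lra.
Qed.

Lemma LPC_ext f g x : (forall y, f y = g y) -> LPC f x -> LPC g x.
Proof.
  intros E [eta [He [gl [gr [C1 [C2 [E1 E2]]]]]]].
  exists eta; split; auto; exists gl, gr; split; [auto|split;[auto|split]];
  intros y Hy; rewrite <- E; auto.
Qed.

Lemma LPC_cont f x : (forall y, continuity_pt f y) -> LPC f x.
Proof. intros C; exists 1; split; [lra|]; exists f, f; repeat split; auto. Qed.

Lemma LPC_op (op : R -> R -> R) f g x :
  (forall a b y, continuity_pt a y -> continuity_pt b y -> continuity_pt (fun z => op (a z) (b z)) y) ->
  LPC f x -> LPC g x -> LPC (fun y => op (f y) (g y)) x.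
Proof.
  intros Hop [e1 [He1 [l1 [r1 [Cl1 [Cr1 [El1 Er1]]]]]]] [e2 [He2 [l2 [r2 [Cl2 [Cr2 [El2 Er2]]]]]]].
  exists (Rmin e1 e2); split; [unfold Rmin; destruct Rle_dec; lra|].
  exists (fun z => op (l1 z) (l2 z)), (fun z => op (r1 z) (r2 z)).
  pose proof (Rmin_l e1 e2); pose proof (Rmin_r e1 e2).
  split; [auto|split;[auto|split]]; intros y Hy.
  - rewrite (El1 y), (El2 y) by lra; auto.
  - rewrite (Er1 y), (Er2 y) by lra; auto.
Qed.

Lemma LPC_plus f g x : LPC f x -> LPC g x -> LPC (fun y => f y + g y) x.
Proof. apply LPC_op. intros a b y Ca Cb. apply (continuity_pt_plus a b y Ca Cb). Qed.

Lemma LPC_mult f g x : LPC f x -> LPC g x -> LPC (fun y => f y * g y) x.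
Proof. apply LPC_op. intros a b y Ca Cb. apply (continuity_pt_mult a b y Ca Cb). Qed.

Lemma LPC_minus f g x : LPC f x -> LPC g x -> LPC (fun y => f y - g y) x.
Proof. apply LPC_op. intros a b y Ca Cb. apply (continuity_pt_minus a b y Ca Cb). Qed.

Lemma LPC_sum (F : nat -> R -> R) x n : (forall k, (k <= n)%nat -> LPC (F k) x) ->
  LPC (fun y => sum_f_R0 (fun k => F k y) n) x.
Proof.
  induction n; intros H; simpl.
  - apply H; lia.
  - apply LPC_plus; [apply IHn; intros; apply H; lia | apply H; lia].
Qed.

Lemma FTC_gen F f a b : a <= b -> (forall x, derivable_pt_lim F x (f x)) ->
  (forall x, continuity_pt f x) -> forall pr : Riemann_integrable f a b, RiemannInt pr = F b - F a.
Proof.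
  intros hab Hd Hc pr.
  assert (C0 : forall x, a <= x <= b -> continuity_pt f x) by auto.
  pose proof (RiemannInt_P29 hab C0) as A1.
  assert (A2 : antiderivative f F a b).
  { split; auto. intros x _. exists (exist _ (f x) (Hd x)). symmetry.
    apply derive_pt_eq_0; auto. }
  destruct (antiderivative_Ucte _ _ _ _ _ A1 A2) as [c Hc'].
  rewrite (RiemannInt_P20 hab (FTC_P1 hab C0) pr).
  rewrite (Hc' b), (Hc' a) by lra. ring.
Qed.

Section Prim.
Variables (f : R -> R) (a b : R) (hab : a <= b) (pr : Riemann_integrable f a b).

Definition prI : forall x, a <= x -> x <= b -> Riemann_integrable f a x :=
  fun x h1 h2 => RiemannInt_P22 pr (conj h1 h2).

Definition Phi := primitive hab prI.

Lemma sub_int c d : a <= c -> c <= d -> d <= b -> Riemann_integrable f c d.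
Proof.
  intros. apply (RiemannInt_P23 (RiemannInt_P22 pr (conj (Rle_trans _ _ _ H H0) H1))). lra.
Qed.

Lemma Phi_diff c d : a <= c -> c <= d -> d <= b -> forall prcd : Riemann_integrable f c d,
  RiemannInt prcd = Phi d - Phi c.
Proof.
  intros H1 H2 H3 prcd. unfold Phi, primitive.
  destruct (Rle_dec a d); [|lra]. destruct (Rle_dec d b); [|lra].
  destruct (Rle_dec a c); [|lra]. destruct (Rle_dec c b); [|lra].
  pose proof (RiemannInt_P26 (prI c r1 r2) prcd (prI d r r0)). lra.
Qed.

Lemma Phi_at x : a <= x -> x <= b -> exists p : Riemann_integrable f a x, Phi x = RiemannInt p.
Proof.
  intros H1 H2. unfold Phi, primitive.
  destruct (Rle_dec a x) as [r1|n]; [|lra]. destruct (Rle_dec x b) as [r2|n]; [|lra].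
  eexists; reflexivity.
Qed.

Lemma Phi_a : Phi a = 0.
Proof. destruct (Phi_at a (Rle_refl a) hab) as [p E]; rewrite E; apply RiemannInt_P9. Qed.

Lemma Phi_b : Phi b = RiemannInt pr.
Proof. destruct (Phi_at b hab (Rle_refl b)) as [p E]; rewrite E; apply RiemannInt_P5. Qed.

Lemma Phi_bound c d l u : a <= c -> c <= d -> d <= b ->
  (forall x, c < x < d -> l <= f x <= u) -> l * (d - c) <= Phi d - Phi c <= u * (d - c).
Proof.
  intros H1 H2 H3 H. rewrite <- (Phi_diff c d H1 H2 H3 (sub_int c d H1 H2 H3)).
  apply RiemannInt_const_bound; auto.
Qed.

Lemma Phi_eq c d g : a <= c -> c <= d -> d <= b -> forall prg : Riemann_integrable g c d,
  (forall x, c < x < d -> f x = g x) -> Phi d - Phi c = RiemannInt prg.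
Proof.
  intros H1 H2 H3 prg H. rewrite <- (Phi_diff c d H1 H2 H3 (sub_int c d H1 H2 H3)).
  apply RiemannInt_P18; auto.
Qed.
End Prim.

Lemma deriv_F r k x : derivable_pt_lim (fun t => r * (t + sin t * cos t) / 2 + k * sin t) x
  ((r * cos x + k) * cos x).
Proof.
  assert (H1 := derivable_pt_lim_id x).
  assert (H2 := derivable_pt_lim_sin x). assert (H3 := derivable_pt_lim_cos x).
  assert (H4 := derivable_pt_lim_mult _ _ _ _ _ H2 H3).
  assert (H5 := derivable_pt_lim_plus _ _ _ _ _ H1 H4).
  assert (H6 := derivable_pt_lim_scal _ (r/2) _ _ H5).
  assert (H7 := derivable_pt_lim_scal _ k _ _ H2).
  assert (H8 := derivable_pt_lim_plus _ _ _ _ _ H6 H7).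
  replace ((r * cos x + k) * cos x) with
    (r / 2 * (1 + (cos x * cos x + sin x * - sin x)) + k * cos x).
  - unfold derivable_pt_lim in *. intros eps He. destruct (H8 eps He) as [d Hd].
    exists d. intros h Hh Hhd. specialize (Hd h Hh Hhd).
    unfold plus_fct, mult_real_fct, mult_fct, id in Hd.
    replace (r * (x + h + sin (x + h) * cos (x + h)) / 2 + k * sin (x + h) -
        (r * (x + sin x * cos x) / 2 + k * sin x)) with
      (r / 2 * (x + h + sin (x + h) * cos (x + h)) + k * sin (x + h) -
        (r / 2 * (x + sin x * cos x) + k * sin x)) by field. auto.
  - pose proof (sin2_cos2 x) as E. unfold Rsqr in E.
    replace (cos x * cos x + sin x * - sin x) with (2 * (cos x * cos x) - 1)
      by (rewrite <- E; ring). field.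
Qed.

Lemma D_LPC r d x : 0 < r -> 0 < d -> LPC (fun t => Dd d (r * cos t) * cos t) x.
Proof.
  intros Hr Hd. unfold Dd, Qd.
  apply LPC_mult; [|apply LPC_cont; intro; reg].
  apply LPC_minus; [apply LPC_cont; intro; reg|].
  apply LPC_mult; [apply LPC_cont; intro; reg|].
  apply LPC_ext with (f := fun z => floorR (r / d * cos (z - 0) + /2)).
  - intro y; rewrite Rminus_0_r; f_equal; field; lra.
  - apply LPC_floor. apply Rlt_le, Rdiv_lt_0_compat; auto.
Qed.

Lemma Qd_val d t (z : Z) : 0 < d -> IZR z - /2 <= t / d < IZR z + /2 -> Qd d t = d * IZR z.
Proof. intros Hd H; unfold Qd; rewrite (floorR_unique _ z); [auto|lra]. Qed.

Lemma cos_lt_dec x y : 0 <= x -> x < y -> y <= PI -> cos y < cos x.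
Proof. intros; apply cos_decreasing_1; lra. Qed.

Lemma part2 r d : 0 < r -> 0 < d ->
  r / d = sqrt (8 - 2 * sqrt (16 - PI ^ 2)) / PI ->
  has_integral (fun t => Dd d (r * cos t) * cos t) (- PI) PI 0.
Proof.
  intros Hr Hd Hx.
  assert (HPI := PI_RGT_0). assert (HP4 := PI_4). assert (HP3 := PI2_3_2).
  set (s := sqrt (16 - PI ^ 2)).
  assert (Hs0 : 0 <= s) by apply sqrt_pos.
  assert (Hs2 : s * s = 16 - PI ^ 2) by (apply sqrt_sqrt; nra).
  assert (Hs4 : s < 4) by nra.
  set (x0 := r / d).
  assert (HX : x0 * x0 * (PI * PI) = 8 - 2 * s).
  { unfold x0; rewrite Hx. fold s. unfold Rdiv.
    replace (sqrt (8 - 2 * s) * / PI * (sqrt (8 - 2 * s) * / PI) * (PI * PI)) with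
      (sqrt (8 - 2 * s) * sqrt (8 - 2 * s)) by (field; lra).
    apply sqrt_sqrt; lra. }
  assert (Hx0 : 0 < x0) by (unfold x0; apply Rdiv_lt_0_compat; auto).
  assert (Hlo : 1/2 < x0).
  { assert (Hp2 : PI ^ 2 = PI * PI) by ring.
    assert (H32 : 0 < 32 - PI*PI) by nra.
    assert (Hsq : (32 - PI*PI)*(32 - PI*PI) > (8*s)*(8*s)).
    { replace ((8*s)*(8*s)) with (64 * (s*s)) by ring. rewrite Hs2, Hp2.
      assert (0 < PI*PI*(PI*PI)) by (apply Rmult_lt_0_compat; nra). nra. }
    assert (32 - PI*PI > 8 * s) by nra.
    assert (x0 * x0 > /4).
    { apply Rmult_lt_reg_r with (PI*PI); [nra|]. rewrite HX. lra. }
    nra. }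
  assert (Hhi : x0 < 3/2).
  { assert (x0 * x0 < 9/4).
    { apply Rmult_lt_reg_r with (PI*PI); [nra|]. rewrite HX. nra. }
    nra. }
  set (c0 := d / (2 * r)).
  assert (Hc0 : c0 = / (2 * x0)) by (unfold c0, x0; field; lra).
  assert (Hc01 : 0 < c0 < 1).
  { rewrite Hc0; split; [apply Rinv_0_lt_compat; lra|].
    rewrite <- Rinv_1; apply Rinv_lt_contravar; lra. }
  set (al := acos c0).
  assert (Hcal : cos al = c0) by (apply cos_acos; lra).
  assert (Hal : 0 < al < PI) by (apply acos_bound_lt; lra).
  assert (Hal2 : al < PI / 2).
  { destruct (Rlt_or_le al (PI/2)); auto. pose proof (cos_le_0 al ltac:(lra) ltac:(lra)). lra. }
  assert (Hsal : sin al = PI * x0 / 4).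
  { assert (E1 := sin2_cos2 al). unfold Rsqr in E1. rewrite Hcal, Hc0 in E1.
    assert (E2 : 0 <= sin al) by (apply sin_ge_0; lra).
    set (y := sin al) in *.
    assert (E3 : PI*PI*(x0*x0)*(x0*x0) = 16*(x0*x0) - 4).
    { apply Rmult_eq_reg_l with (PI*PI); [|nra].
      replace (PI*PI*(PI*PI*(x0*x0)*(x0*x0))) with ((x0*x0*(PI*PI))*(x0*x0*(PI*PI))) by ring.
      replace (PI*PI*(16*(x0*x0)-4)) with (16*(x0*x0*(PI*PI)) - 4*(PI*PI)) by ring.
      rewrite HX. replace (PI ^ 2) with (PI * PI) in Hs2 by ring. nra. }
    assert (E4 : 16*x0*x0*(/(2*x0)*/(2*x0)) = 4) by (field; lra).
    assert (F1 : 16*x0*x0*(y*y) = 16*(x0*x0) - 4).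
    { replace (y*y) with (1 - /(2*x0)*/(2*x0)) by lra.
      rewrite Rmult_minus_distr_l, E4. ring. }
    assert (F2 : (4*x0*y)*(4*x0*y) = (PI*x0*x0)*(PI*x0*x0)).
    { replace ((4*x0*y)*(4*x0*y)) with (16*x0*x0*(y*y)) by ring. rewrite F1, <- E3. ring. }
    assert (F3 : 4*x0*y = PI*x0*x0).
    { assert (0 <= 4*x0*y) by nra. assert (0 <= PI*x0*x0) by nra. nra. }
    apply Rmult_eq_reg_l with (4*x0); [|lra]. rewrite F3. field. }
  set (D := fun t => Dd d (r * cos t) * cos t).
  set (g := fun k t => (r * cos t + k) * cos t).
  assert (Qv : forall t (z : Z), IZR z - /2 <= r * cos t / d < IZR z + /2 ->
             D t = g (- (d * IZR z)) t).
  { intros t z Hz; unfold D, g, Dd; rewrite (Qd_val d _ z Hd Hz); ring. }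
  assert (Hrd : r / d = x0) by auto.
  assert (Hcos : forall t, r * cos t / d = x0 * cos t) by (intro; unfold x0; field; lra).
  assert (Hc0x : x0 * c0 = /2) by (rewrite Hc0; field; lra).
  assert (Cb : forall t, -1 <= cos t <= 1) by (intro; apply COS_bound).
  assert (R1 : forall t, 0 <= t < al -> D t = g (- d) t).
  { intros t Ht. rewrite (Qv t 1%Z). { f_equal; ring. }
    rewrite Hcos. assert (c0 < cos t) by (rewrite <- Hcal; apply cos_lt_dec; lra).
    pose proof (Cb t). simpl IZR. nra. }
  assert (R2 : forall t, al < t < PI - al -> D t = g 0 t).
  { intros t Ht. rewrite (Qv t 0%Z). { f_equal; ring. }
    rewrite Hcos. assert (cos t < c0) by (rewrite <- Hcal; apply cos_lt_dec; lra).
    assert (cos (PI - t) < c0) by (rewrite <- Hcal; apply cos_lt_dec; lra).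
    rewrite cos_minus, cos_PI, sin_PI in H0. simpl IZR. nra. }
  assert (R3 : forall t, PI - al < t <= PI -> D t = g d t).
  { intros t Ht. rewrite (Qv t (-1)%Z). { f_equal; simpl; ring. }
    rewrite Hcos. assert (c0 < cos (PI - t)) by (rewrite <- Hcal; apply cos_lt_dec; lra).
    rewrite cos_minus, cos_PI, sin_PI in H. pose proof (Cb t). simpl IZR. nra. }
  assert (Dev : forall t, D (- t) = D t) by (intro; unfold D; rewrite cos_neg; auto).
  assert (gev : forall k t, g k (- t) = g k t) by (intros; unfold g; rewrite cos_neg; auto).
  assert (Hint : forall a b, a <= b -> Riemann_integrable D a b).
  { intros a b hab; apply LPC_int; auto; intros; apply D_LPC; auto. }
  assert (hab : - PI <= PI) by lra.
  set (pr := Hint _ _ hab).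
  exists pr.
  assert (Gi : forall k a b, a <= b -> forall prg : Riemann_integrable (g k) a b,
    RiemannInt prg = (fun t => r * (t + sin t * cos t) / 2 + k * sin t) b -
                     (fun t => r * (t + sin t * cos t) / 2 + k * sin t) a).
  { intros k a b Hab prg.
    assert (Cg : forall x, continuity_pt (g k) x) by (intro; unfold g; reg).
    exact (FTC_gen (fun t => r * (t + sin t * cos t) / 2 + k * sin t) (g k) a b Hab
      (fun x => deriv_F r k x) Cg prg). }
  assert (Gc : forall k a b, a <= b -> Riemann_integrable (g k) a b).
  { intros; apply cont_int; auto; intro; unfold g; reg. }
  assert (Piece : forall k a b, - PI <= a -> a <= b -> b <= PI ->
    (forall t, a < t < b -> D t = g k t) ->
    Phi D (- PI) PI hab pr b - Phi D (- PI) PI hab pr a =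
      (r * (b + sin b * cos b) / 2 + k * sin b) - (r * (a + sin a * cos a) / 2 + k * sin a)).
  { intros k a b H1 H2 H3 H. rewrite (Phi_eq D _ _ hab pr a b (g k) H1 H2 H3 (Gc k a b H2) H).
    apply Gi; auto. }
  rewrite <- (Phi_b D _ _ hab pr).
  replace (Phi D (- PI) PI hab pr PI) with
   ((Phi D (- PI) PI hab pr PI - Phi D (- PI) PI hab pr (PI - al)) +
    (Phi D (- PI) PI hab pr (PI - al) - Phi D (- PI) PI hab pr al) +
    (Phi D (- PI) PI hab pr al - Phi D (- PI) PI hab pr (- al)) +
    (Phi D (- PI) PI hab pr (- al) - Phi D (- PI) PI hab pr (- (PI - al))) +
    (Phi D (- PI) PI hab pr (- (PI - al)) - Phi D (- PI) PI hab pr (- PI)) +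
    Phi D (- PI) PI hab pr (- PI)) by ring.
  rewrite (Piece d (PI - al) PI) by (try lra; intros; apply R3; lra).
  rewrite (Piece 0 al (PI - al)) by (try lra; intros; apply R2; lra).
  rewrite (Piece (- d) (- al) al) by (first [lra | intros t Ht;
     destruct (Rle_or_lt 0 t); [apply R1; lra| rewrite <- Dev, <- gev; apply R1; lra]]).
  rewrite (Piece 0 (- (PI - al)) (- al)) by (try lra; intros t Ht;
     rewrite <- Dev, <- gev; apply R2; lra).
  rewrite (Piece d (- PI) (- (PI - al))) by (try lra; intros t Ht;
     rewrite <- Dev, <- gev; apply R3; lra).
  rewrite (Phi_a D _ _ hab pr).
  rewrite !sin_neg, !cos_neg, sin_PI, cos_PI, sin_PI_x.
  replace (cos (PI - al)) with (- cos al) by (rewrite cos_minus, cos_PI, sin_PI; ring).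
  rewrite Hsal. unfold x0 in *. field_simplify; [|lra]. lra.
Qed.

Fixpoint sumn (f : nat -> R) (n : nat) : R :=
  match n with O => 0 | S m => sumn f m + f m end.

Lemma sumn_R0 f n : sum_f_R0 f n = sumn f (S n).
Proof. induction n; simpl in *; [ring|rewrite IHn; simpl; ring]. Qed.

Lemma sumn_ext f g n : (forall k, (k < n)%nat -> f k = g k) -> sumn f n = sumn g n.
Proof. induction n; intros H; simpl; auto. rewrite IHn, H; auto. Qed.

Lemma sumn_lin f g a b n : sumn (fun k => a * f k + b * g k) n = a * sumn f n + b * sumn g n.
Proof. induction n; simpl; [ring|rewrite IHn; ring]. Qed.

Lemma sumn_scal f a n : sumn (fun k => a * f k) n = a * sumn f n.
Proof. induction n; simpl; [ring|rewrite IHn; ring]. Qed.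

Lemma sumn_shift f n : sumn (fun k => f (S k)) n = sumn f n - f O + f n.
Proof. induction n; simpl; [ring|rewrite IHn; ring]. Qed.

Lemma sumn_front f n : sumn f (S n) = f O + sumn (fun k => f (S k)) n.
Proof. rewrite sumn_shift; simpl; ring. Qed.

Lemma sumn_rev f n : sumn f n = sumn (fun k => f (n - 1 - k)%nat) n.
Proof.
  induction n; auto.
  rewrite (sumn_front (fun k => f (S n - 1 - k)%nat)). simpl sumn at 1. rewrite IHn.
  replace (S n - 1 - 0)%nat with n by lia.
  rewrite (sumn_ext (fun k => f (S n - 1 - S k)%nat) (fun k => f (n - 1 - k)%nat)); [ring|].
  intros; f_equal; lia.
Qed.

Lemma sumn_odd f n : (forall k, (k < n)%nat -> f (n - 1 - k)%nat = - f k) -> sumn f n = 0.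
Proof.
  intros H. assert (E : sumn f n = - sumn f n).
  { rewrite sumn_rev at 1. rewrite (sumn_ext _ (fun k => -1 * f k)).
    - rewrite sumn_scal; ring.
    - intros; rewrite H; auto; ring. }
  lra.
Qed.

Lemma telescope (a b v : nat -> R) (e : R) m :
  (forall k, (k < m)%nat -> Rabs (a (S k) - a k - b k) <= (v (S k) - v k) + e) ->
  Rabs (a m - a O - sumn b m) <= (v m - v O) + INR m * e.
Proof.
  induction m; intros H.
  - simpl. rewrite Rminus_diag, Rminus_0_r, Rabs_R0. lra.
  - rewrite S_INR. simpl sumn.
    assert (H1 := IHm (fun k Hk => H k ltac:(lia))). assert (H2 := H m ltac:(lia)).
    replace (a (S m) - a O - (sumn b m + b m)) with
      ((a m - a O - sumn b m) + (a (S m) - a m - b m)) by ring.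
    eapply Rle_trans; [apply Rabs_triang|]. lra.
Qed.

Lemma Rabs_sin_le y : Rabs (sin y) <= Rabs y.
Proof.
  assert (HPI := PI_RGT_0). assert (HP3 := PI2_3_2).
  assert (K : forall y, 0 <= y -> Rabs (sin y) <= y).
  { intros z Hz. destruct (Req_dec z 0) as [E|NE]; [subst; rewrite sin_0, Rabs_R0; lra|].
    pose proof (sin_lt_x z ltac:(lra)). pose proof (SIN_bound z).
    destruct (Rle_or_lt z 1).
    - assert (0 <= sin z) by (apply sin_ge_0; lra). rewrite Rabs_pos_eq; lra.
    - unfold Rabs; destruct Rcase_abs; lra. }
  destruct (Rle_or_lt 0 y).
  - rewrite (Rabs_pos_eq y); auto.
  - replace y with (- - y) by ring. rewrite sin_neg, Rabs_Ropp, Rabs_Ropp.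
    rewrite (Rabs_pos_eq (- y)) by lra. apply K; lra.
Qed.

Lemma cos_lip x c : Rabs (cos x - cos c) <= Rabs (x - c).
Proof.
  rewrite form2. rewrite !Rabs_mult. pose proof (Rabs_sin_le ((x - c)/2)).
  pose proof (SIN_bound ((x + c)/2)). assert (Rabs (sin ((x + c)/2)) <= 1) by (unfold Rabs; destruct Rcase_abs; lra).
  replace (Rabs (-2)) with 2 by (unfold Rabs; destruct Rcase_abs; lra).
  replace (Rabs ((x - c)/2)) with (Rabs (x - c) / 2) in H.
  2:{ unfold Rdiv; rewrite Rabs_mult, (Rabs_pos_eq (/2)); lra. }
  pose proof (Rabs_pos (sin ((x - c)/2))). pose proof (Rabs_pos (sin ((x + c)/2))). nra.
Qed.

Lemma sin_lip x c : Rabs (sin x - sin c) <= Rabs (x - c).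
Proof.
  rewrite form4. rewrite !Rabs_mult. pose proof (Rabs_sin_le ((x - c)/2)).
  pose proof (COS_bound ((x + c)/2)). assert (Rabs (cos ((x + c)/2)) <= 1) by (unfold Rabs; destruct Rcase_abs; lra).
  replace (Rabs 2) with 2 by (unfold Rabs; destruct Rcase_abs; lra).
  replace (Rabs ((x - c)/2)) with (Rabs (x - c) / 2) in H.
  2:{ unfold Rdiv; rewrite Rabs_mult, (Rabs_pos_eq (/2)); lra. }
  pose proof (Rabs_pos (sin ((x - c)/2))). pose proof (Rabs_pos (cos ((x + c)/2))). nra.
Qed.

Section QV.
Variables (r d : R) (Hr : 0 < r) (Hd : 0 < d).

Definition q t := Qd d (r * cos t).
Definition Mq := r + d.
Definition V t := if Rle_dec t 0 then q t else 2 * q 0 - q t.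

Lemma q_bound t : Rabs (q t) <= Mq.
Proof.
  unfold q, Mq. eapply Rle_trans; [apply Qd_abs; auto|].
  rewrite Rabs_mult, (Rabs_pos_eq r) by lra. pose proof (COS_bound t).
  assert (Rabs (cos t) <= 1) by (unfold Rabs; destruct Rcase_abs; lra). nra.
Qed.

Lemma q_le_0 t : q t <= q 0.
Proof. unfold q; apply Qd_mono; auto. rewrite cos_0. pose proof (COS_bound t); nra. Qed.

Lemma q_mono_neg x y : - PI <= x -> x <= y -> y <= 0 -> q x <= q y.
Proof.
  intros. unfold q; apply Qd_mono; auto. apply Rmult_le_compat_l; [lra|].
  destruct (Req_dec x y); [subst; lra|].
  rewrite <- (cos_neg x), <- (cos_neg y). left; apply cos_decreasing_1; lra.
Qed.

Lemma q_mono_pos x y : 0 <= x -> x <= y -> y <= PI -> q y <= q x.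
Proof.
  intros. unfold q; apply Qd_mono; auto. apply Rmult_le_compat_l; [lra|].
  destruct (Req_dec x y); [subst; lra|]. left; apply cos_decreasing_1; lra.
Qed.

Lemma V_osc c x : - PI <= c -> c <= x -> x <= PI -> Rabs (q x - q c) <= V x - V c.
Proof.
  intros H1 H2 H3. unfold V.
  destruct (Rle_dec x 0); destruct (Rle_dec c 0); try lra.
  - pose proof (q_mono_neg c x H1 H2 r0). rewrite Rabs_pos_eq; lra.
  - pose proof (q_le_0 x); pose proof (q_le_0 c). unfold Rabs; destruct Rcase_abs; lra.
  - pose proof (q_mono_pos c x ltac:(lra) H2 H3). rewrite Rabs_minus_sym, Rabs_pos_eq; lra.
Qed.

Lemma V_mono c x : - PI <= c -> c <= x -> x <= PI -> V c <= V x.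
Proof. intros; pose proof (V_osc c x H H0 H1); pose proof (Rabs_pos (q x - q c)); lra. Qed.

Lemma V_range : V PI - V (- PI) <= 4 * Mq.
Proof.
  pose proof PI_RGT_0. unfold V. destruct (Rle_dec PI 0); [lra|]. destruct (Rle_dec (-PI) 0); [|lra].
  pose proof (q_bound 0); pose proof (q_bound PI); pose proof (q_bound (- PI)).
  unfold Rabs in *; repeat destruct Rcase_abs; lra.
Qed.

Lemma Gw_osc (w : R -> R) c x h : (forall a b, Rabs (w a - w b) <= Rabs (a - b)) ->
  (forall a, Rabs (w a) <= 1) ->
  - PI <= c -> c <= x -> x <= c + h -> c + h <= PI ->
  Rabs (q x * w x - q c * w c) <= (V (c + h) - V c) + Mq * h.
Proof.
  intros Hl Hb H1 H2 H3 H4.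
  replace (q x * w x - q c * w c) with ((q x - q c) * w x + q c * (w x - w c)) by ring.
  eapply Rle_trans; [apply Rabs_triang|]. rewrite !Rabs_mult.
  pose proof (V_osc c x H1 H2 ltac:(lra)). pose proof (V_mono x (c + h) ltac:(lra) H3 H4).
  pose proof (Hb x) as Hbx. pose proof (Hl x c) as Hlx. pose proof (q_bound c).
  rewrite (Rabs_pos_eq (x - c)) in Hlx by lra.
  pose proof (Rabs_pos (q x - q c)). pose proof (Rabs_pos (w x - w c)). pose proof (Rabs_pos (q c)).
  assert (Mq >= 0) by (unfold Mq; lra). nra.
Qed.

End QV.

Lemma Rabs4 a b c e : Rabs (a + b + c - e) <= Rabs a + Rabs b + Rabs c + Rabs e.
Proof.
  unfold Rminus. eapply Rle_trans; [apply Rabs_triang|]. rewrite Rabs_Ropp.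
  pose proof (Rabs_triang (a + b) c). pose proof (Rabs_triang a b). lra.
Qed.

Lemma RS r d (Hr : 0 < r) (Hd : 0 < d) (w : R -> R)
  (Hl : forall a b, Rabs (w a - w b) <= Rabs (a - b)) (Hb : forall a, Rabs (w a) <= 1)
  (pr : Riemann_integrable (fun x => q r d x * w x) (-PI) PI) (m : nat) (t : R) :
  - PI < t -> t <= - PI + 2 * PI / INR (S m) ->
  Rabs (RiemannInt pr - 2 * PI / INR (S m) *
    sumn (fun k => q r d (t + INR k * (2 * PI / INR (S m))) * w (t + INR k * (2 * PI / INR (S m)))) (S m))
  <= 2 * PI / INR (S m) * ((7 + 2 * PI) * Mq r d).
Proof.
  intros Ht1 Ht2.
  assert (HPI := PI_RGT_0).
  set (h := 2 * PI / INR (S m)) in *.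
  assert (Hn : 0 < INR (S m)) by (apply lt_0_INR; lia).
  assert (Hh : 0 < h) by (unfold h; apply Rdiv_lt_0_compat; lra).
  assert (Hnh : INR (S m) * h = 2 * PI) by (unfold h; field; lra).
  assert (Hmh : INR m * h = 2 * PI - h) by (rewrite S_INR in Hnh; lra).
  assert (Hh2 : h <= 2 * PI).
  { assert (1 <= INR (S m)) by (rewrite S_INR; pose proof (pos_INR m); lra). nra. }
  assert (HM : 0 <= Mq r d) by (unfold Mq; lra).
  set (Gf := fun x => q r d x * w x).
  assert (GB : forall x, Rabs (Gf x) <= Mq r d).
  { intro x; unfold Gf; rewrite Rabs_mult. pose proof (q_bound r d Hr Hd x). pose proof (Hb x).
    pose proof (Rabs_pos (q r d x)); pose proof (Rabs_pos (w x)). nra. }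
  assert (hab : - PI <= PI) by lra.
  set (Ph := Phi Gf (-PI) PI hab pr).
  set (c := fun k : nat => t + INR k * h).
  assert (Hck : forall k, (k <= m)%nat -> - PI < c k <= PI).
  { intros k Hk. unfold c. apply le_INR in Hk. pose proof (pos_INR k). nra. }
  assert (HcS : forall k, c (S k) = c k + h) by (intro; unfold c; rewrite S_INR; ring).
  assert (Cell : forall k, (k < m)%nat ->
    Rabs (Ph (c (S k)) - Ph (c k) - h * Gf (c k)) <=
      (h * V r d (c (S k)) - h * V r d (c k)) + Mq r d * h * h).
  { intros k Hk. pose proof (Hck k ltac:(lia)). pose proof (Hck (S k) ltac:(lia)).
    rewrite HcS in *.
    set (D := V r d (c k + h) - V r d (c k) + Mq r d * h).
    assert (Bd : forall x, c k < x < c k + h -> Gf (c k) - D <= Gf x <= Gf (c k) + D).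
    { intros x Hx. assert (Rabs (Gf x - Gf (c k)) <= D).
      { unfold Gf, D. apply Gw_osc; auto; lra. }
      unfold Rabs in H1; destruct Rcase_abs in H1; lra. }
    pose proof (Phi_bound Gf (-PI) PI hab pr (c k) (c k + h) _ _ ltac:(lra) ltac:(lra) ltac:(lra) Bd).
    replace (c k + h - c k) with h in H1 by ring. fold Ph in H1.
    unfold D in H1. unfold Rabs; destruct Rcase_abs; nra. }
  pose proof (telescope (fun k => Ph (c k)) (fun k => h * Gf (c k)) (fun k => h * V r d (c k))
     (Mq r d * h * h) m Cell) as Tel. simpl in Tel.
  assert (Vm : V r d (c m) - V r d (c O) <= 4 * Mq r d).
  { pose proof (V_range r d Hr Hd). pose proof (Hck m (le_n m)). pose proof (Hck O ltac:(lia)).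
    pose proof (V_mono r d Hr Hd (c m) PI ltac:(lra) ltac:(lra) ltac:(lra)).
    pose proof (V_mono r d Hr Hd (-PI) (c O) ltac:(lra) ltac:(lra) ltac:(lra)). lra. }
  assert (Hc0 : c O = t) by (unfold c; simpl; ring).
  assert (Hcm : c m = t + 2 * PI - h) by (unfold c; rewrite Hmh; ring).
  assert (E1 : Rabs (Ph (c O) - Ph (- PI)) <= Mq r d * h).
  { assert (Bd : forall x, - PI < x < c O -> - Mq r d <= Gf x <= Mq r d).
    { intros x _; pose proof (GB x); unfold Rabs in H; destruct Rcase_abs in H; lra. }
    pose proof (Phi_bound Gf (-PI) PI hab pr (-PI) (c O) _ _ ltac:(lra) ltac:(lra) ltac:(lra) Bd).
    fold Ph in H. unfold Rabs; destruct Rcase_abs; nra. }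
  assert (E2 : Rabs (Ph PI - Ph (c m)) <= Mq r d * h).
  { pose proof (Hck m (le_n m)).
    assert (Bd : forall x, c m < x < PI -> - Mq r d <= Gf x <= Mq r d).
    { intros x _; pose proof (GB x); unfold Rabs in H0; destruct Rcase_abs in H0; lra. }
    pose proof (Phi_bound Gf (-PI) PI hab pr (c m) PI _ _ ltac:(lra) ltac:(lra) ltac:(lra) Bd).
    fold Ph in H0. unfold Rabs; destruct Rcase_abs; nra. }
  assert (E3 : Rabs (h * Gf (c m)) <= h * Mq r d).
  { rewrite Rabs_mult, Rabs_pos_eq by lra. pose proof (GB (c m)). nra. }
  rewrite <- (Phi_b Gf (-PI) PI hab pr). fold Ph.
  assert (Ph0 : Ph (-PI) = 0) by (apply Phi_a).
  rewrite <- sumn_scal. simpl sumn.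
  change (fun k => h * (q r d (t + INR k * h) * w (t + INR k * h))) with (fun k => h * Gf (c k)).
  change (h * (q r d (t + INR m * h) * w (t + INR m * h))) with (h * Gf (c m)).
  replace (Ph PI - (sumn (fun k => h * Gf (c k)) m + h * Gf (c m))) with
    ((Ph (c O) - Ph (-PI)) + (Ph (c m) - Ph (c O) - sumn (fun k => h * Gf (c k)) m)
      + (Ph PI - Ph (c m)) - h * Gf (c m)) by (rewrite Ph0; ring).
  eapply Rle_trans; [apply Rabs4|].
  assert (INR m * (Mq r d * h * h) <= 2 * PI * Mq r d * h).
  { replace (INR m * (Mq r d * h * h)) with ((INR m * h) * (Mq r d * h)) by ring.
    rewrite Hmh. nra. }
  nra.
Qed.

Lemma T_shift (Gf : R -> R) (Hper : forall x, Gf (x + 2 * PI) = Gf x) n (Hn : (0 < n)%nat) t :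
  sumn (fun k => Gf ((t + 2 * PI / INR n) + INR k * (2 * PI / INR n))) n =
  sumn (fun k => Gf (t + INR k * (2 * PI / INR n))) n.
Proof.
  assert (Hn' : 0 < INR n) by (apply lt_0_INR; auto).
  set (f := fun j => Gf (t + INR j * (2 * PI / INR n))).
  transitivity (sumn (fun k => f (S k)) n).
  - apply sumn_ext. intros k _. unfold f. rewrite S_INR. f_equal. ring.
  - rewrite sumn_shift. unfold f. replace (t + INR n * (2 * PI / INR n)) with (t + 2 * PI) by (field; lra).
    rewrite Hper. simpl. replace (t + 0 * (2 * PI / INR n)) with t by ring. ring.
Qed.

Lemma T_shiftZ (Gf : R -> R) (Hper : forall x, Gf (x + 2 * PI) = Gf x) n (Hn : (0 < n)%nat) t (z : Z) :
  sumn (fun k => Gf ((t + IZR z * (2 * PI / INR n)) + INR k * (2 * PI / INR n))) n =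
  sumn (fun k => Gf (t + INR k * (2 * PI / INR n))) n.
Proof.
  set (h := 2 * PI / INR n).
  assert (Nat : forall (j : nat) t, sumn (fun k => Gf ((t + INR j * h) + INR k * h)) n =
                              sumn (fun k => Gf (t + INR k * h)) n).
  { induction j; intro s.
    - simpl. replace (s + 0 * h) with s by ring. auto.
    - rewrite S_INR. replace (s + (INR j + 1) * h) with ((s + INR j * h) + h) by ring.
      unfold h; rewrite T_shift; auto. }
  destruct (Z_le_gt_dec 0 z).
  - destruct (IZN z l) as [j ->]. rewrite <- INR_IZR_INZ. apply Nat.
  - assert (E : z = (- Z.of_nat (Z.to_nat (- z)))%Z) by lia. rewrite E.
    rewrite opp_IZR, <- INR_IZR_INZ. set (j := Z.to_nat (- z)).
    rewrite <- (Nat j (t + - INR j * h)). apply sumn_ext; intros; f_equal; ring.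
Qed.

Lemma T_reduce (Gf : R -> R) (Hper : forall x, Gf (x + 2 * PI) = Gf x) n (Hn : (0 < n)%nat) t0 :
  exists t, - PI < t <= - PI + 2 * PI / INR n /\ sumn (fun k => Gf (t0 + INR k * (2 * PI / INR n))) n =
    sumn (fun k => Gf (t + INR k * (2 * PI / INR n))) n.
Proof.
  assert (Hn' : 0 < INR n) by (apply lt_0_INR; auto).
  assert (HPI := PI_RGT_0).
  set (h := 2 * PI / INR n).
  assert (Hh : 0 < h) by (unfold h; apply Rdiv_lt_0_compat; lra).
  set (z := up ((- PI - t0) / h)).
  destruct (archimed ((- PI - t0) / h)) as [A1 A2]. fold z in A1, A2.
  exists (t0 + IZR z * h). split.
  - split.
    + apply Rmult_lt_compat_r with (r := h) in A1; auto.
      replace ((- PI - t0) / h * h) with (- PI - t0) in A1 by (field; lra). lra.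
    + assert (IZR z <= (- PI - t0) / h + 1) by lra.
      apply Rmult_le_compat_r with (r := h) in H; [|lra].
      replace (((- PI - t0) / h + 1) * h) with (- PI - t0 + h) in H by (field; lra). lra.
  - unfold h. rewrite T_shiftZ; auto.
Qed.

Lemma sum_f_sumn f N : (0 < N)%nat -> sum_f 1 N f = sumn (fun k => f (S k)) N.
Proof.
  intros HN. unfold sum_f. rewrite sumn_R0. replace (S (N - 1)) with N by lia.
  apply sumn_ext; intros; f_equal; lia.
Qed.

Lemma Esq_formula r d N psi : (0 < N)%nat ->
  let h := 2 * PI / INR N in
  let SC := sumn (fun k => q r d ((h - psi) + INR k * h) * cos ((h - psi) + INR k * h)) N in
  let SS := sumn (fun k => q r d ((h - psi) + INR k * h) * sin ((h - psi) + INR k * h)) N in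
  Esq d r N (harm N) psi = (r - 2 / INR N * SC) ^ 2 + (2 / INR N * SS) ^ 2.
Proof.
  intros HN h SC SS.
  assert (Hn' : 0 < INR N) by (apply lt_0_INR; auto).
  unfold Esq, Edelta, harm. simpl fst; simpl snd.
  rewrite !sum_f_sumn by auto.
  assert (Th : forall k, 2 * INR (S k) * PI / INR N = ((h - psi) + INR k * h) + psi).
  { intro k; unfold h; rewrite S_INR; field; lra. }
  assert (Cq : forall k, Qd d (r * cos psi * cos (2 * INR (S k) * PI / INR N) +
      r * sin psi * sin (2 * INR (S k) * PI / INR N)) = q r d ((h - psi) + INR k * h)).
  { intro k. unfold q. f_equal. rewrite Th.
    set (u := h - psi + INR k * h). replace u with ((u + psi) - psi) at 3 by ring.
    rewrite (cos_minus (u + psi) psi). ring. }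
  rewrite (sumn_ext (fun k => Qd d (r * cos psi * cos (2 * INR (S k) * PI / INR N) +
      r * sin psi * sin (2 * INR (S k) * PI / INR N)) * cos (2 * INR (S k) * PI / INR N))
    (fun k => cos psi * (q r d ((h - psi) + INR k * h) * cos ((h - psi) + INR k * h)) +
              (- sin psi) * (q r d ((h - psi) + INR k * h) * sin ((h - psi) + INR k * h)))).
  2:{ intros k _. rewrite Cq, Th, cos_plus. ring. }
  rewrite (sumn_ext (fun k => Qd d (r * cos psi * cos (2 * INR (S k) * PI / INR N) +
      r * sin psi * sin (2 * INR (S k) * PI / INR N)) * sin (2 * INR (S k) * PI / INR N))
    (fun k => cos psi * (q r d ((h - psi) + INR k * h) * sin ((h - psi) + INR k * h)) +
              sin psi * (q r d ((h - psi) + INR k * h) * cos ((h - psi) + INR k * h)))).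
  2:{ intros k _. rewrite Cq, Th, sin_plus. ring. }
  rewrite !sumn_lin. fold SC SS.
  set (X := (r * cos psi - 2 / INR N * (cos psi * SC + - sin psi * SS)) ^ 2 +
    (r * sin psi - 2 / INR N * (cos psi * SS + sin psi * SC)) ^ 2).
  assert (HX : 0 <= X) by (unfold X; apply Rplus_le_le_0_compat; apply pow2_ge_0).
  replace (sqrt X ^ 2) with X by (simpl; rewrite Rmult_1_r, sqrt_sqrt; auto).
  unfold X. pose proof (sin2_cos2 psi) as E. unfold Rsqr in E.
  replace ((r - 2 / INR N * SC) ^ 2 + (2 / INR N * SS) ^ 2) with
    ((sin psi * sin psi + cos psi * cos psi) * ((r - 2 / INR N * SC) ^ 2 + (2 / INR N * SS) ^ 2))
    by (rewrite E; ring).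
  ring.
Qed.

From Stdlib Require Import FunctionalExtensionality.

Lemma LPC_sumn (F : nat -> R -> R) x n : (forall k, (k < n)%nat -> LPC (F k) x) ->
  LPC (fun y => sumn (fun k => F k y) n) x.
Proof.
  induction n; intros H; simpl.
  - apply LPC_cont; intro; apply continuity_pt_const; intros a b; auto.
  - apply LPC_plus; [apply IHn; intros; apply H; lia | apply H; lia].
Qed.

Lemma LPC_q_neg r d a x : 0 < r -> 0 < d -> LPC (fun y => q r d (a - y)) x.
Proof.
  intros Hr Hd. unfold q, Qd.
  apply LPC_mult; [apply LPC_cont; intro; apply continuity_pt_const; intros u v; auto|].
  apply LPC_ext with (f := fun z => floorR (r / d * cos (z - a) + /2)).
  - intro y. f_equal. replace (a - y) with (- (y - a)) by ring. rewrite cos_neg. field; lra.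
  - apply LPC_floor. apply Rlt_le, Rdiv_lt_0_compat; auto.
Qed.

Lemma LPC_q r d x : 0 < r -> 0 < d -> LPC (fun y => q r d y) x.
Proof.
  intros Hr Hd. apply LPC_ext with (f := fun y => q r d (0 - - y)).
  - intro; f_equal; ring.
  - apply LPC_ext with (f := fun y => q r d (0 - - y)); [auto|].
    unfold q, Qd.
    apply LPC_mult; [apply LPC_cont; intro; apply continuity_pt_const; intros u v; auto|].
    apply LPC_ext with (f := fun z => floorR (r / d * cos (z - 0) + /2)).
    + intro y. f_equal. rewrite Rminus_0_r. replace (0 - - y) with y by ring. field; lra.
    + apply LPC_floor. apply Rlt_le, Rdiv_lt_0_compat; auto.
Qed.

Lemma Esq_int r d N : 0 < r -> 0 < d -> (0 < N)%nat ->
  Riemann_integrable (Esq d r N (harm N)) 0 (2 * PI).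
Proof.
  intros Hr Hd HN. assert (HPI := PI_RGT_0).
  set (h := 2 * PI / INR N).
  apply Riemann_integrable_ext with (f := fun psi =>
    (r - 2 / INR N * sumn (fun k => q r d ((h + INR k * h) - psi) * cos ((h - psi) + INR k * h)) N) ^ 2
    + (2 / INR N * sumn (fun k => q r d ((h + INR k * h) - psi) * sin ((h - psi) + INR k * h)) N) ^ 2).
  - intros psi _. rewrite Esq_formula by auto. fold h.
    replace (fun k => q r d ((h + INR k * h) - psi) * cos ((h - psi) + INR k * h)) with
      (fun k => q r d ((h - psi) + INR k * h) * cos ((h - psi) + INR k * h)).
    2:{ apply functional_extensionality; intro k; f_equal; f_equal; ring. }
    replace (fun k => q r d ((h + INR k * h) - psi) * sin ((h - psi) + INR k * h)) with
      (fun k => q r d ((h - psi) + INR k * h) * sin ((h - psi) + INR k * h)).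
    2:{ apply functional_extensionality; intro k; f_equal; f_equal; ring. }
    reflexivity.
  - apply LPC_int; [lra|]. intros x _.
    apply LPC_ext with (f := fun psi =>
      (r - 2 / INR N * sumn (fun k => q r d ((h + INR k * h) - psi) * cos ((h - psi) + INR k * h)) N) *
      (r - 2 / INR N * sumn (fun k => q r d ((h + INR k * h) - psi) * cos ((h - psi) + INR k * h)) N)
    + (2 / INR N * sumn (fun k => q r d ((h + INR k * h) - psi) * sin ((h - psi) + INR k * h)) N) *
      (2 / INR N * sumn (fun k => q r d ((h + INR k * h) - psi) * sin ((h - psi) + INR k * h)) N)).
    { intro; ring. }
    assert (C : forall c, LPC (fun _ : R => c) x).
    { intro; apply LPC_cont; intro; apply continuity_pt_const; intros u v; auto. }
    assert (S1 : LPC (fun psi => sumn (fun k => q r d ((h + INR k * h) - psi) * cos ((h - psi) + INR k * h)) N) x).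
    { apply LPC_sumn with (F := fun k psi => q r d ((h + INR k * h) - psi) * cos ((h - psi) + INR k * h)).
      intros k _. apply LPC_mult; [apply LPC_q_neg; auto|apply LPC_cont; intro; reg]. }
    assert (S2 : LPC (fun psi => sumn (fun k => q r d ((h + INR k * h) - psi) * sin ((h - psi) + INR k * h)) N) x).
    { apply LPC_sumn with (F := fun k psi => q r d ((h + INR k * h) - psi) * sin ((h - psi) + INR k * h)).
      intros k _. apply LPC_mult; [apply LPC_q_neg; auto|apply LPC_cont; intro; reg]. }
    apply LPC_plus; apply LPC_mult;
      try (apply LPC_minus; [apply C|]); apply LPC_mult; auto.
Qed.

Lemma q_per r d x : q r d (x + 2 * PI) = q r d x.
Proof. unfold q. f_equal. rewrite cos_plus, cos_2PI, sin_2PI. ring. Qed.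

Lemma q_even r d x : q r d (- x) = q r d x.
Proof. unfold q; rewrite cos_neg; auto. Qed.

Lemma cos_lip' : forall a b, Rabs (cos a - cos b) <= Rabs (a - b).
Proof. apply cos_lip. Qed.
Lemma sin_lip' : forall a b, Rabs (sin a - sin b) <= Rabs (a - b).
Proof. apply sin_lip. Qed.
Lemma cos_b : forall a, Rabs (cos a) <= 1.
Proof. intro a; pose proof (COS_bound a); unfold Rabs; destruct Rcase_abs; lra. Qed.
Lemma sin_b : forall a, Rabs (sin a) <= 1.
Proof. intro a; pose proof (SIN_bound a); unfold Rabs; destruct Rcase_abs; lra. Qed.

Lemma G2_zero r d (Hr : 0 < r) (Hd : 0 < d)
  (pr : Riemann_integrable (fun x => q r d x * sin x) (-PI) PI) : RiemannInt pr = 0.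
Proof.
  assert (HPI := PI_RGT_0).
  set (K := (7 + 2 * PI) * Mq r d).
  assert (HK : 0 <= K) by (unfold K, Mq; nra).
  assert (Bd : forall m, Rabs (RiemannInt pr) <= 2 * PI / INR (S m) * K).
  { intro m. set (h := 2 * PI / INR (S m)).
    assert (Hn : 0 < INR (S m)) by (apply lt_0_INR; lia).
    assert (Hh : 0 < h) by (unfold h; apply Rdiv_lt_0_compat; lra).
    pose proof (RS r d Hr Hd sin sin_lip' sin_b pr m (- PI + h / 2) ltac:(lra) ltac:(fold h; lra)) as H.
    fold h in H.
    rewrite sumn_odd in H.
    - rewrite Rmult_0_r, Rminus_0_r in H. exact H.
    - intros k Hk. replace (- PI + h / 2 + INR (S m - 1 - k) * h) with (- (- PI + h / 2 + INR k * h)).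
      + rewrite q_even, sin_neg. ring.
      + rewrite minus_INR by lia. rewrite minus_INR by lia. simpl (INR 1).
        assert (INR (S m) * h = 2 * PI) by (unfold h; field; lra). nra. }
  destruct (Req_dec (RiemannInt pr) 0) as [E|NE]; auto. exfalso.
  assert (Hp : 0 < Rabs (RiemannInt pr)) by (apply Rabs_pos_lt; auto).
  destruct (archimed_cor1 (Rabs (RiemannInt pr) / (2 * PI * K + 1))) as [N [HN1 HN2]].
  { apply Rdiv_lt_0_compat; nra. }
  destruct N as [|m]; [lia|].
  specialize (Bd m).
  assert (Hn : 0 < INR (S m)) by (apply lt_0_INR; lia).
  assert (2 * PI / INR (S m) * K < Rabs (RiemannInt pr)); [|lra].
  apply Rmult_lt_compat_r with (r := 2 * PI * K + 1) in HN1; [|nra].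
  replace (Rabs (RiemannInt pr) / (2 * PI * K + 1) * (2 * PI * K + 1)) with (Rabs (RiemannInt pr)) in HN1
    by (field; nra).
  replace (2 * PI / INR (S m) * K) with ((2 * PI * K) * / INR (S m)) by (field; lra).
  assert (0 < / INR (S m)) by (apply Rinv_0_lt_compat; lra). nra.
Qed.

Lemma part1 r d : 0 < r -> 0 < d ->
  has_integral (fun t => Dd d (r * cos t) * cos t) (- PI) PI 0 ->
  exists C : R, exists N0 : nat,
    forall N : nat, (3 <= N)%nat -> (N0 <= N)%nat ->
      exists I : R, has_integral (Esq d r N (harm N)) 0 (2 * PI) I /\ sqrt I <= C / INR N.
Proof.
  intros Hr Hd [pr0 H0].
  assert (HPI := PI_RGT_0).
  set (K := (7 + 2 * PI) * Mq r d).
  assert (HK : 0 <= K) by (unfold K, Mq; nra).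
  assert (hab : - PI <= PI) by lra.
  assert (prC : Riemann_integrable (fun t => (r * cos t + 0) * cos t) (- PI) PI)
    by (apply cont_int; auto; intro; reg).
  assert (IC : RiemannInt prC = r * PI).
  { rewrite (FTC_gen (fun t => r * (t + sin t * cos t) / 2 + 0 * sin t) _ _ _ hab
      (fun x => deriv_F r 0 x) ltac:(intro; reg) prC).
    rewrite sin_PI, sin_neg, sin_PI. field. }
  set (prG' := RiemannInt_P10 (-1) prC pr0).
  assert (prG : Riemann_integrable (fun x => q r d x * cos x) (- PI) PI).
  { apply Riemann_integrable_ext with (2 := prG'). intros; unfold q, Dd; ring. }
  assert (IG : RiemannInt prG = r * PI).
  { rewrite (RiemannInt_P18 prG prG') by (auto; intros; unfold q, Dd; ring).
    rewrite (RiemannInt_P13 prC pr0 prG'), IC, H0. ring. }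
  assert (prS : Riemann_integrable (fun x => q r d x * sin x) (- PI) PI).
  { apply LPC_int; auto; intros; apply LPC_mult; [apply LPC_q; auto|apply LPC_cont; intro; reg]. }
  assert (IS := G2_zero r d Hr Hd prS).
  exists (4 * K * sqrt PI), 3%nat. intros N HN _.
  destruct N as [|m]; [lia|].
  assert (Hn : 0 < INR (S m)) by (apply lt_0_INR; lia).
  set (h := 2 * PI / INR (S m)).
  assert (Hh : 0 < h) by (unfold h; apply Rdiv_lt_0_compat; lra).
  assert (H2N : 2 / INR (S m) = h / PI) by (unfold h; field; lra).
  assert (Pt : forall psi, Esq d r (S m) (harm (S m)) psi <= 8 * (K / INR (S m)) ^ 2).
  { intro psi. rewrite Esq_formula by lia. fold h.
    destruct (T_reduce (fun x => q r d x * cos x) ltac:(intro; cbv beta; rewrite q_per, cos_plus, cos_2PI, sin_2PI; ring)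
       (S m) ltac:(lia) (h - psi)) as [t1 [Ht1 E1]].
    destruct (T_reduce (fun x => q r d x * sin x) ltac:(intro; cbv beta; rewrite q_per, sin_plus, cos_2PI, sin_2PI; ring)
       (S m) ltac:(lia) (h - psi)) as [t2 [Ht2 E2]].
    fold h in Ht1, Ht2, E1, E2. rewrite E1, E2.
    pose proof (RS r d Hr Hd cos cos_lip' cos_b prG m t1 ltac:(lra) ltac:(fold h; lra)) as R1.
    pose proof (RS r d Hr Hd sin sin_lip' sin_b prS m t2 ltac:(lra) ltac:(fold h; lra)) as R2.
    fold h K in R1, R2. rewrite IG in R1. rewrite IS in R2.
    set (A := sumn (fun k => q r d (t1 + INR k * h) * cos (t1 + INR k * h)) (S m)) in *.
    set (B := sumn (fun k => q r d (t2 + INR k * h) * sin (t2 + INR k * h)) (S m)) in *.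
    rewrite H2N.
    assert (X1 : Rabs (r - h / PI * A) <= 2 * (K / INR (S m))).
    { replace (r - h / PI * A) with ((r * PI - h * A) / PI) by (field; lra).
      unfold Rdiv at 1. rewrite Rabs_mult, (Rabs_pos_eq (/ PI)) by (left; apply Rinv_0_lt_compat; lra).
      apply Rmult_le_reg_r with PI; auto. rewrite Rmult_assoc, Rinv_l, Rmult_1_r by lra.
      replace (2 * (K / INR (S m)) * PI) with (h * K) by (unfold h; field; lra). auto. }
    assert (X2 : Rabs (h / PI * B) <= 2 * (K / INR (S m))).
    { replace (h / PI * B) with (- (0 - h * B) / PI) by (field; lra).
      unfold Rdiv at 1. rewrite Rabs_mult, Rabs_Ropp, (Rabs_pos_eq (/ PI)) by (left; apply Rinv_0_lt_compat; lra).
      apply Rmult_le_reg_r with PI; auto. rewrite Rmult_assoc, Rinv_l, Rmult_1_r by lra.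
      replace (2 * (K / INR (S m)) * PI) with (h * K) by (unfold h; field; lra). auto. }
    rewrite <- (pow2_abs (r - h / PI * A)). rewrite <- (pow2_abs (h / PI * B)).
    pose proof (Rabs_pos (r - h / PI * A)). pose proof (Rabs_pos (h / PI * B)).
    set (a1 := Rabs (r - h / PI * A)) in *. set (b1 := Rabs (h / PI * B)) in *.
    set (c1 := K / INR (S m)) in *.
    assert (a1 * a1 <= 4 * (c1 * c1)) by nra. assert (b1 * b1 <= 4 * (c1 * c1)) by nra.
    simpl. lra. }
  pose proof (Esq_int r d (S m) Hr Hd ltac:(lia)) as pE.
  exists (RiemannInt pE). split; [exists pE; auto|].
  set (c := 8 * (K / INR (S m)) ^ 2).
  assert (I1 : RiemannInt pE <= c * (2 * PI - 0)).
  { rewrite <- (RiemannInt_P15 (RiemannInt_P14 0 (2 * PI) c)).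
    apply RiemannInt_P19; [lra|]. intros; unfold fct_cte; apply Pt. }
  set (Y := 4 * K * sqrt PI / INR (S m)).
  assert (HY : 0 <= Y).
  { unfold Y. apply Rmult_le_pos; [|left; apply Rinv_0_lt_compat; lra].
    pose proof (sqrt_pos PI). nra. }
  rewrite <- (sqrt_square Y HY).
  apply sqrt_le_1_alt. eapply Rle_trans; [exact I1|].
  unfold c, Y. right. replace (4 * K * sqrt PI / INR (S m) * (4 * K * sqrt PI / INR (S m))) with
    (16 * (K / INR (S m)) ^ 2 * (sqrt PI * sqrt PI)) by (field; lra).
  rewrite sqrt_sqrt by lra. ring.
Qed.

Theorem theorem1p2 :
  (forall r delta : R, 0 < r -> 0 < delta ->
     has_integral (fun theta => Dd delta (r * cos theta) * cos theta) (- PI) PI 0 ->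
     exists C : R, exists N0 : nat,
       forall N : nat, (3 <= N)%nat -> (N0 <= N)%nat ->
         exists I : R,
           has_integral (Esq delta r N (harm N)) 0 (2 * PI) I /\
           sqrt I <= C / INR N)
  /\
  (forall r delta : R, 0 < r -> 0 < delta ->
     r / delta = sqrt (8 - 2 * sqrt (16 - PI ^ 2)) / PI ->
     has_integral (fun theta => Dd delta (r * cos theta) * cos theta) (- PI) PI 0).
Proof.
  split.
  - intros r delta Hr Hd H. apply part1; auto.
  - intros r delta Hr Hd H. apply part2; auto.
Qed.
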